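(* Let $n\ge1$ and $1>\mu_1>\mu_2>\dots>\mu_{n+1}>0$. Let $\mathcal{P}$ be the set of all polynomials $p(x)=(x-\lambda_1)(x-\lambda_2)\cdots(x-\lambda_n)$ with real $\lambda_k$ satisfying $\mu_k\ge\lambda_k\ge\mu_{k+1}$ for $k=1,\dots,n$. Then there exist constants $C>0$ and $0<c<1$, depending only on $\mu_1,\dots,\mu_{n+1}$, such that for every $m\ge1$ and all $p_1,\dots,p_m\in\mathcal{P}$, $$\|F(p_1)F(p_2)\cdots F(p_m)\|\le Cc^m.$$
   Context: For a monic polynomial $p(z)=z^n+b_{n-1}z^{n-1}+\dots+b_0$, its Frobenius matrix $F(p)$ is the $n\times n$ matrix whose first row is $(-b_{n-1},-b_{n-2},\dots,-b_0)$, whose entries $(i+1,i)$ for $i=1,\dots,n-1$ equal $1$, and all other entries are $0$. $\|\cdot\|$ denotes any fixed matrix norm (all are equivalent). *)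

(* Defs.v *)
From HB Require Import structures.
From mathcomp Require Import all_boot all_order all_algebra.
From mathcomp Require Import reals.
Set Implicit Arguments. Unset Strict Implicit. Unset Printing Implicit Defensive.
Import Order.TTheory GRing.Theory Num.Theory.
Local Open Scope ring_scope.

Definition frob {R : nzRingType} (n : nat) (p : {poly R}) : 'M[R]_n :=
  \matrix_(i < n, j < n)
    if (i == 0 :> nat) then - p`_(n.-1 - j)
    else if (i == j.+1 :> nat) then 1 else 0.

Definition mxprod {R : nzRingType} (n : nat) (s : seq 'M[R]_n) : 'M[R]_n :=
  foldr (fun A B => A *m B) 1%:M s.

(* a fixed matrix norm: the max-entry norm (all norms are equivalent) *)
Definition mxnorm {R : realDomainType} (n : nat) (A : 'M[R]_n) : R :=
  \big[Num.max/0]_(i < n) \big[Num.max/0]_(j < n) `|A i j|.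

(* The class P: mu k is mu_{k+1} of the paper (0-based indexing). *)
Definition inP {R : realDomainType} (n : nat) (mu : nat -> R) (p : {poly R}) : Prop :=
  exists lam : nat -> R,
    (forall k, (k < n)%N -> mu k.+1 <= lam k <= mu k) /\
    p = \prod_(k < n) ('X - (lam k)%:P).

(* Main.v *)
Require Import Defs.
From HB Require Import structures.
From mathcomp Require Import all_boot all_order all_algebra.
From mathcomp Require Import reals.
From mathcomp Require Import ring lra.
From mathcomp Require Import zify.
Set Implicit Arguments. Unset Strict Implicit. Unset Printing Implicit Defensive.
Import Order.TTheory GRing.Theory Num.Theory.
Local Open Scope ring_scope.

Lemma pp_mono (R : realDomainType) (s t : R) : s <= t -> `|s| + s <= `|t| + t.
Proof.
move=> h; case: (lerP 0 s) => hs.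
  by rewrite !ger0_norm //; [lra | lra].
rewrite ltr0_norm // addNr; have := ler_norm (- t); rewrite normrN => ht; lra.
Qed.

Lemma nn_mono (R : realDomainType) (s t : R) : s <= t -> `|t| - t <= `|s| - s.
Proof.
move=> h; have : -t <= -s by rewrite lerN2.
by move/pp_mono; rewrite !normrN.
Qed.

Lemma contract (R : realDomainType) N (r r' m a : 'I_N -> R) (c M : R) :
  \sum_j r j = 0 -> \sum_j r' j = 0 ->
  (forall j, r' j = m j * r j - c * a j) ->
  (forall j, 0 <= a j) -> (forall j, 0 <= m j <= M) ->
  \sum_j `|r' j| <= M * \sum_j `|r j|.
Proof.
move=> s0 s0' hr ha hm.
case: (lerP 0 c) => hc.
  have -> : \sum_j `|r' j| = \sum_j (`|r' j| + r' j) by rewrite big_split /= s0' addr0.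
  have -> : M * \sum_j `|r j| = \sum_j M * (`|r j| + r j) by rewrite -mulr_sumr big_split /= s0 addr0.
  apply: ler_sum => j _; apply: le_trans (pp_mono (_ : r' j <= m j * r j)) _.
    by rewrite hr lerBlDr lerDl mulr_ge0.
  have /andP [h1 h2] := hm j.
  rewrite normrM (ger0_norm h1) -mulrDr ler_wpM2r //.
  have := ler_norm (- r j); rewrite normrN => h; lra.
have -> : \sum_j `|r' j| = \sum_j (`|r' j| - r' j) by rewrite sumrB s0' subr0.
have -> : M * \sum_j `|r j| = \sum_j M * (`|r j| - r j) by rewrite -mulr_sumr sumrB s0 subr0.
apply: ler_sum => j _; apply: le_trans (nn_mono (_ : m j * r j <= r' j)) _.
  rewrite hr; have := mulr_ge0_le0 (ha j) (ltW hc); rewrite mulrC => h; lra.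
have /andP [h1 h2] := hm j.
rewrite normrM (ger0_norm h1) -mulrBr ler_wpM2r //.
by rewrite subr_ge0 ler_norm.
Qed.

Section S.
Variable R : realType.
Variable n : nat.
Variable mu : nat -> R.
Hypothesis hdec : forall k, (k < n.+1)%N -> mu k.+1 < mu k.

Lemma mu_lt a b : (a < b)%N -> (b <= n.+1)%N -> mu b < mu a.
Proof.
elim: b => // b IH; rewrite ltnS leq_eqVlt => /orP [/eqP -> | hab] hb.
  by apply: hdec.
apply: lt_trans (IH hab (ltnW hb)); exact: hdec.
Qed.

Lemma mu_le a b : (a <= b)%N -> (b <= n.+1)%N -> mu b <= mu a.
Proof.
rewrite leq_eqVlt => /orP [/eqP -> // | hab] hb; exact/ltW/mu_lt.
Qed.

Lemma mu_inj a b : (a <= n.+1)%N -> (b <= n.+1)%N -> mu a = mu b -> a = b.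
Proof.
move=> ha hb e; case: (ltngtP a b) => // h.
  by have := mu_lt h hb; rewrite e ltxx.
by have := mu_lt h ha; rewrite e ltxx.
Qed.

Definition dd (j : 'I_n.+2) : R := \prod_(k < n.+1) (mu j - mu (lift j k)).
Definition ell (j : 'I_n.+2) : {poly R} := \prod_(k < n.+1) ('X - (mu (lift j k))%:P).

Lemma dd_neq0 j : dd j != 0.
Proof.
rewrite prodf_seq_neq0; apply/allP => k _ /=; rewrite subr_eq0; apply/eqP => e.
have h : (j : nat) = lift j k.
  by apply: (mu_inj _ _ e); rewrite -ltnS; [exact: ltn_ord | exact: (ltn_ord (lift j k))].
by move: (neq_lift j k); rewrite -(inj_eq val_inj) /=; move: h => /= <-; rewrite eqxx.

Qed.

Lemma size_ell j : size (ell j) = n.+2.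
Proof. by rewrite /ell -big_enum size_prod_XsubC size_enum_ord. Qed.

Lemma coef_ell_top j : (ell j)`_n.+1 = 1.
Proof.
have := lead_coef_prod_XsubC (index_enum 'I_n.+1) predT (fun k => mu (lift j k)).
by rewrite /lead_coef -/(ell j) size_ell.
Qed.

Lemma ell_eval j (m : 'I_n.+2) : (ell j).[mu m] = if m == j then dd j else 0.
Proof.
rewrite /ell horner_prod; case: eqP => [-> | /eqP hne].
  by apply: eq_bigr => k _; rewrite hornerXsubC.
rewrite eq_sym in hne; case: (unlift_some hne) => k -> _.
by rewrite (bigD1 k) //= hornerXsubC subrr mul0r.
Qed.

Lemma lagrange (f : {poly R}) : (size f <= n.+2)%N ->
  f = \sum_(j < n.+2) (f.[mu j] / dd j) *: ell j.
Proof.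
move=> hf; apply/eqP; rewrite -subr_eq0; apply/eqP.
apply: (@roots_geq_poly_eq0 _ _ (mkseq mu n.+2)).
- apply/allP => x /mapP [i]; rewrite mem_iota add0n => /andP [_ hi] ->.
  rewrite /root hornerD hornerN horner_sum.
  rewrite (bigD1 (Ordinal hi)) //= big1 ?addr0.
    rewrite hornerZ; have := ell_eval (Ordinal hi) (Ordinal hi); rewrite eqxx /= => ->.
    by rewrite divfK ?dd_neq0 // subrr.
  move=> j hj; rewrite hornerZ; have := ell_eval j (Ordinal hi).
  by rewrite eq_sym (negPf hj) /= => ->; rewrite mulr0.
- rewrite map_inj_in_uniq ?iota_uniq //.
  by move=> a b; rewrite !mem_iota !add0n => ha hb; apply: mu_inj.
- rewrite size_mkseq; apply/leq_sizeP => k hk.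
  rewrite coefB coef_sum big1 ?subr0.
    by move/leq_sizeP : hf; apply.
  move=> j _; rewrite coefZ; move/leq_sizeP: (eq_leq (size_ell j)) => ->//.
  by rewrite mulr0.
Qed.

Lemma sum_lagrange (f : {poly R}) : (size f <= n.+2)%N ->
  \sum_(j < n.+2) f.[mu j] / dd j = f`_n.+1.
Proof.
move=> hf; rewrite {2}(lagrange hf) coef_sum; apply: eq_bigr => j _.
by rewrite coefZ coef_ell_top mulr1.
Qed.


Definition Wp (w : 'rV[R]_n.+1) : {poly R} := \sum_(i < n.+1) w 0 i *: 'X^(n - i).

Lemma coef_Wp (w : 'rV[R]_n.+1) k : (Wp w)`_k = if (k <= n)%N then w 0 (inord (n - k)) else 0.
Proof.
rewrite /Wp coef_sum; case: ifP => hk.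
  have hi : (n - k < n.+1)%N by rewrite ltnS leq_subr.
  rewrite (bigD1 (Ordinal hi)) //= big1 ?addr0.
    rewrite coefZ coefXn subKn // eqxx mulr1; congr (w 0 _).
    by apply: val_inj; rewrite /= inordK.
  move=> i hne; rewrite coefZ coefXn; case: eqP => [e|]; last by rewrite mulr0.
  case/eqP: hne; apply: val_inj => /=; rewrite e subKn //.
  by rewrite -ltnS.
apply: big1 => i _; rewrite coefZ coefXn; case: eqP => [e|]; last by rewrite mulr0.
by move: hk; rewrite e leq_subr.
Qed.

Lemma size_Wp (w : 'rV[R]_n.+1) : (size (Wp w) <= n.+1)%N.
Proof. by apply/leq_sizeP => k hk; rewrite coef_Wp leqNgt hk. Qed.

Lemma frob_entry (w : 'rV[R]_n.+1) (p : {poly R}) (j : 'I_n.+1) :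
  (w *m frob n.+1 p) 0 j = - w 0 0 * p`_(n - j) + (if (j < n)%N then w 0 (inord j.+1) else 0).
Proof.
rewrite !mxE big_ord_recl ?mxE /= mulrN; congr (_ + _); first by rewrite mulNr.
under eq_bigr => l _ do rewrite mxE /=.
case: ifP => hj.
  rewrite (bigD1 (Ordinal hj)) //= big1 ?addr0.
    rewrite eqxx mulr1; congr (w 0 _); apply: val_inj; by rewrite /= inordK.
  move=> l hl; case: eqP => [e|]; last by rewrite mulr0.
  by case/eqP: hl; apply: val_inj => /=; move: e; rewrite /bump leq0n add1n; case.
apply: big1 => l _; case: eqP => [e|]; last by rewrite mulr0.
by move: e; rewrite /bump leq0n add1n => -[e]; move: hj; rewrite -e ltn_ord.
Qed.


Lemma Wp_step (w : 'rV[R]_n.+1) (p : {poly R}) :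
  size p = n.+2 -> p`_n.+1 = 1 ->
  Wp (w *m frob n.+1 p) = 'X * Wp w - w 0 0 *: p.
Proof.
move=> sp lp; apply/polyP => k.
rewrite coef_Wp coefB coefXM coefZ.
case: (leqP k n) => hk.
  rewrite frob_entry inordK ?ltnS ?leq_subr // subKn //.
  case: k hk => [|k] hk /=.
    by rewrite subn0 ltnn addr0 add0r mulNr.
  have e1 : (n - k.+1 < n)%N by lia.
  have e2 : ((n - k.+1).+1 = n - k)%N by lia.
  by rewrite e1 e2 coef_Wp (ltnW hk) addrC mulNr.
case: k hk => [//|k] hk /=.
rewrite coef_Wp; case: (ltngtP k n) => hkn.
- by move: hk; rewrite ltnS leqNgt hkn.
- have : (size p <= k.+1)%N by rewrite sp ltnS.
  by move/leq_sizeP => ->; rewrite // mulr0 subrr.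
- rewrite hkn subnn lp mulr1.
  have -> : (inord 0 : 'I_n.+1) = 0 by apply: val_inj; rewrite /= inordK.
  by rewrite subrr.
Qed.


Hypothesis hpos : 0 < mu n.+1.

Definition rc (w : 'rV[R]_n.+1) (j : 'I_n.+2) : R := (Wp w).[mu j] / dd j.
Definition nr (w : 'rV[R]_n.+1) : R := \sum_j `|rc w j|.

Lemma sum_rc w : \sum_j rc w j = 0.
Proof.
rewrite /rc sum_lagrange; last by apply: leq_trans (size_Wp w) _.
by rewrite coef_Wp ltnn.
Qed.

Lemma inP_size p : inP n.+1 mu p -> size p = n.+2 /\ p`_n.+1 = 1.
Proof.
case=> lam [_ ->]; split; first by rewrite -big_enum size_prod_XsubC size_enum_ord.
have := lead_coef_prod_XsubC (index_enum 'I_n.+1) predT (fun k => lam (val k)).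
by rewrite /lead_coef -big_enum size_prod_XsubC size_enum_ord big_enum.
Qed.

Lemma a_ge0 p (j : 'I_n.+2) : inP n.+1 mu p -> 0 <= p.[mu j] / dd j.
Proof.
case=> lam [hl ->]; rewrite horner_prod /dd -prodf_div.
apply: prodr_ge0 => k _; rewrite hornerXsubC.
have hk := ltn_ord k; have /andP [l1 l2] := hl k hk.
have hj : (j <= n.+1)%N by rewrite -ltnS.
rewrite /= /bump; case: (leqP j k) => hjk /=.
  rewrite add1n divr_ge0 // subr_ge0.
    exact: le_trans l2 (mu_le hjk (ltnW hk)).
  by apply: mu_le; rewrite // ltnW.
rewrite add0n; apply: mulr_le0; first rewrite subr_le0.
  exact: le_trans (mu_le hjk hj) l1.
by rewrite invr_le0 subr_le0; apply: mu_le => //; apply: ltnW.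
Qed.

Lemma rc_step w p (j : 'I_n.+2) : inP n.+1 mu p ->
  rc (w *m frob n.+1 p) j = mu j * rc w j - w 0 0 * (p.[mu j] / dd j).
Proof.
case/inP_size => sp lp; rewrite /rc Wp_step // hornerD hornerN hornerZ hornerM hornerX.
by rewrite mulrBl mulrA [in RHS]mulrA.
Qed.

Lemma nr_step w p : inP n.+1 mu p -> nr (w *m frob n.+1 p) <= mu 0 * nr w.
Proof.
move=> hp; apply: (@contract _ _ (rc w) _ (fun j => mu j) (fun j => p.[mu j] / dd j) (w 0 0)).
- exact: sum_rc.
- exact: sum_rc.
- by move=> j; apply: rc_step.
- by move=> j; apply: a_ge0.
- move=> j; have hj : (j <= n.+1)%N by rewrite -ltnS.
  apply/andP; split; last exact: mu_le (leq0n _) hj.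
  by apply: ltW; exact: lt_le_trans hpos (mu_le hj (leqnn _)).
Qed.


Lemma nr_iter (ps : seq {poly R}) : (forall p, p \in ps -> inP n.+1 mu p) ->
  forall w, nr (w *m mxprod (map (frob n.+1) ps)) <= mu 0 ^+ size ps * nr w.
Proof.
have mu0 : 0 <= mu 0.
  apply: ltW; apply: lt_le_trans hpos _; exact: mu_le.
elim: ps => [|p ps IH] hps w /=.
  by rewrite /mxprod /= mulmx1 expr0 mul1r.
rewrite mulmxA exprS -mulrA mulrC.
apply: le_trans (IH _ _) _; first by move=> q hq; apply: hps; rewrite inE hq orbT.
rewrite -mulrA ler_wpM2l ?exprn_ge0 // mulrC; apply: nr_step.
by apply: hps; rewrite inE eqxx.
Qed.

Lemma le_sum1 (I : finType) (F : I -> R) i : (forall j, 0 <= F j) -> F i <= \sum_j F j.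
Proof. by move=> h; rewrite (bigD1 i) //= lerDl sumr_ge0. Qed.

Definition Kc : R := 1 + \sum_(j < n.+2) \sum_(e < n.+2) `|(ell j)`_e|.

Lemma Kc_ge0 : 0 <= Kc.
Proof. by rewrite addr_ge0 // sumr_ge0 // => j _; rewrite sumr_ge0. Qed.

Lemma coef_bound (w : 'rV[R]_n.+1) i : `|w 0 i| <= Kc * nr w.
Proof.
have -> : w 0 i = (Wp w)`_(n - i).
  rewrite coef_Wp leq_subr; congr (w 0 _); apply: val_inj.
  by rewrite /= subKn ?inordK // -ltnS.
rewrite (lagrange (leq_trans (size_Wp w) (leqnSn _))) coef_sum /nr mulr_sumr.
apply: le_trans (ler_norm_sum _ _ _) _; apply: ler_sum => j _.
rewrite coefZ normrM mulrC ler_wpM2r //.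
have he : (n - i < n.+2)%N by rewrite ltnS (leq_trans (leq_subr _ _)).
apply: le_trans (_ : \sum_(j0 < n.+2) \sum_(e < n.+2) `|(ell j0)`_e| <= Kc).
  apply: le_trans (le_sum1 j _) ; last by move=> j0; rewrite sumr_ge0.
  apply: le_trans (le_sum1 (Ordinal he) _) => //.
by rewrite /Kc lerDr.
Qed.
End S.

Theorem lemma3p2 (R : realType) (n : nat) (mu : nat -> R)
  (hn : (1 <= n)%N)
  (hmu1 : mu 0%N < 1) (hmun : 0 < mu n)
  (hdec : forall k, (k < n)%N -> mu k.+1 < mu k) :
  exists C c : R, 0 < C /\ 0 < c < 1 /\
    forall ps : seq {poly R}, (1 <= size ps)%N ->
      (forall p, p \in ps -> inP n mu p) ->
      mxnorm (mxprod (map (frob n) ps)) <= C * c ^+ size ps.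
Proof.
case: n hn hmun hdec => [//|n] _ hmun hdec.
have mu0 : 0 < mu 0 by apply: lt_le_trans hmun _; exact: (mu_le hdec (leq0n _) (leqnn _)).
set S := 1 + \sum_(i < n.+1) nr mu (row i (1%:M : 'M[R]_n.+1)).
have S_ge1 : 1 <= S by rewrite lerDl sumr_ge0 // => i _; apply: sumr_ge0.
have K1 : 1 <= Kc n mu by rewrite lerDl sumr_ge0 // => i _; apply: sumr_ge0.
exists (Kc n mu * S), (mu 0); split; first by rewrite mulr_gt0 // (lt_le_trans ltr01).
split; first by rewrite mu0.
move=> ps _ hps; rewrite /mxnorm.
have hc : 0 <= Kc n mu * S * mu 0 ^+ size ps.
  have := le_trans ler01 K1; have := le_trans ler01 S_ge1; have := ltW mu0 => *.
  by rewrite !mulr_ge0 ?exprn_ge0.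
apply: bigmax_le => // i _; apply: bigmax_le => // j _.
set M := mxprod _.
have -> : M i j = (row i 1%:M *m M) 0 j by rewrite -row_mul mul1mx mxE.
apply: le_trans (coef_bound hdec _ _) _.
rewrite -mulrA ler_wpM2l ?(le_trans ler01) //.
apply: le_trans (nr_iter hdec hmun hps _) _.
rewrite mulrC ler_wpM2r ?exprn_ge0 ?ltW //.
have h : nr mu (row i (1%:M : 'M[R]_n.+1)) <= \sum_(i < n.+1) nr mu (row i (1%:M : 'M[R]_n.+1)).
  by apply: (le_sum1 (F := fun i => nr mu (row i (1%:M : 'M[R]_n.+1)))) => k; apply: sumr_ge0.
rewrite /S; lra.
Qed.
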